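(* Let $p,n\in\mathbb N$ with $p\ge n\ge 10$ and $p=k(n-1)+n-6$ for some $k\in\mathbb N$. Then $$\mathrm{ex}(p;T_n^3)=\frac{(n-2)p-5(n-6)}2.$$
   Context: All graphs are finite simple graphs. For a graph $L$, $\mathrm{ex}(p;L)$ denotes the maximum number of edges in a graph on $p$ vertices that contains no subgraph isomorphic to $L$. For $n\ge 6$, $T_n^3$ is the tree on vertex set $\{v_0,\ldots,v_{n-1}\}$ with edge set $\{v_0v_1,v_0v_2,\ldots,v_0v_{n-4},\ v_1v_{n-3},\ v_1v_{n-2},\ v_1v_{n-1}\}$. $\mathbb N=\{1,2,\ldots\}$. *)

(* Defs.v *)
From mathcomp Require Import all_boot.
Set Implicit Arguments. Unset Strict Implicit. Unset Printing Implicit Defensive.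

Definition is_graph (v : nat) (E : {set {set 'I_v}}) : bool :=
  [forall e in E, #|e| == 2].

Definition contains (p m : nat) (G : {set {set 'I_p}}) (L : {set {set 'I_m}}) : bool :=
  [exists f : {ffun 'I_m -> 'I_p}, injectiveb f && [forall e in L, (f @: e) \in G]].

Definition ex (p m : nat) (L : {set {set 'I_m}}) : nat :=
  \max_(G : {set {set 'I_p}} | is_graph G && ~~ contains G L) #|G|.

(* Edges of T_n^3, vertices v_i identified with i : 'I_n:
   v0 v_i for 1 <= i <= n-4, and v1 v_j for n-3 <= j <= n-1. *)
Definition T3edge (n i j : nat) : bool :=
  ((i == 0) && (1 <= j <= n - 4)) || ((i == 1) && (n - 3 <= j <= n - 1)).

Definition T3 (n : nat) : {set {set 'I_n}} :=
  [set e : {set 'I_n} | [exists i : 'I_n, exists j : 'I_n,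
     (e == [set i; j]) && T3edge n i j]].

(* Main.v *)
Require Import Defs.
From mathcomp Require Import all_boot.
From mathcomp Require Import zify.
Set Implicit Arguments. Unset Strict Implicit. Unset Printing Implicit Defensive.

Lemma ex_subset (T : finType) (A : {set T}) k :
  k <= #|A| -> exists2 B : {set T}, B \subset A & #|B| = k.
Proof.
elim: k => [|k IH] H; first by exists set0; rewrite ?sub0set ?cards0.
have [B sBA cB] := IH (ltnW H).
have : #|A :\: B| > 0 by rewrite cardsD (setIidPr sBA); lia.
case/card_gt0P => x; rewrite inE => /andP [xB xA].
exists (x |: B); first by rewrite subUset sub1set xA sBA.
by rewrite cardsU1 xB cB.
Qed.

Section Basics.
Variable p : nat.
Variable G : {set {set 'I_p}}.
Hypothesis HG : is_graph G.

Definition adj (x y : 'I_p) : bool := [set x; y] \in G.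

Lemma adjC x y : adj x y = adj y x.
Proof. by rewrite /adj setUC. Qed.

Lemma adj_irr x : adj x x = false.
Proof.
apply/negbTE/negP => H. move/forall_inP: HG => /(_ _ H).
by rewrite setUid cards1.
Qed.

Lemma adj_neq x y : adj x y -> x != y.
Proof. by apply: contraTneq => ->; rewrite adj_irr. Qed.

Definition N (V : {set 'I_p}) x := [set y in V | adj x y].
Definition deg V x := #|N V x|.

Lemma inN (V : {set 'I_p}) x y : (y \in N V x) = (y \in V) && adj x y.
Proof. by rewrite inE. Qed.

Lemma N_sub (V : {set 'I_p}) x : N V x \subset V.
Proof. by apply/subsetP => y; rewrite inN => /andP []. Qed.

Lemma notinN (V : {set 'I_p}) x : x \notin N V x.
Proof. by rewrite inN adj_irr andbF. Qed.

Lemma deg_le (V : {set 'I_p}) x : x \in V -> deg V x < #|V|.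
Proof.
move=> xV; apply: proper_card; apply/properP; split; first exact: N_sub.
by exists x => //; rewrite notinN.
Qed.

Lemma cardsum (A : {set 'I_p}) (P : pred 'I_p) :
  #|[set y in A | P y]| = \sum_(y in A) P y.
Proof.
rewrite -sum1_card [LHS]big_mkcond [RHS]big_mkcond /=.
apply: eq_bigr => i _; rewrite !inE.
by case: (i \in A) => //=; case: (P i).
Qed.

Lemma NI (V : {set 'I_p}) x (Y : {set 'I_p}) : Y \subset V -> N V x :&: Y = [set y in Y | adj x y].
Proof.
move=> sYV; apply/setP => y; rewrite !inE.
case yY: (y \in Y); last by rewrite andbF.
by rewrite (subsetP sYV _ yY) ?andbT.
Qed.

Lemma dc (V X Y : {set 'I_p}) : X \subset V -> Y \subset V ->
  \sum_(x in X) #|N V x :&: Y| = \sum_(y in Y) #|N V y :&: X|.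
Proof.
move=> sX sY.
rewrite (eq_bigr (fun x => \sum_(y in Y) adj x y)); last first.
  by move=> x _; rewrite NI // cardsum.
rewrite [RHS](eq_bigr (fun y => \sum_(x in X) adj y x)); last first.
  by move=> y _; rewrite NI // cardsum.
rewrite exchange_big /=; apply: eq_bigr => y _; apply: eq_bigr => x _.
by rewrite adjC.
Qed.

Lemma decomp (V S : {set 'I_p}) : S \subset V ->
  \sum_(x in V) deg V x = \sum_(x in V :\: S) deg (V :\: S) x +
     \sum_(x in S) (deg V x + #|N V x :&: (V :\: S)|).
Proof.
move=> sSV.
rewrite (big_setID S) /= (setIidPr sSV) big_split /= addnCA; congr (_ + _).
have e1 : forall x, x \in V :\: S -> deg V x = #|N V x :&: S| + deg (V :\: S) x.
  move=> x _; rewrite /deg -(cardsID S (N V x)); congr (_ + _).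
  apply: eq_card => y; rewrite !inE.
  by case: (y \in S); case: (y \in V).
rewrite (eq_bigr _ e1) big_split /= addnC; congr (_ + _).
by rewrite (dc (V := V)) // subsetDl.
Qed.

End Basics.

Section Main.
Variable p : nat.
Variable G : {set {set 'I_p}}.
Hypothesis HG : is_graph G.
Variable n : nat.
Hypothesis n10 : 10 <= n.
Hypothesis Tfree : ~~ contains G (T3 n).

Local Notation adj := (adj G).
Local Notation N := (N G).
Local Notation deg := (deg G).

Lemma adjirr x : adj x x = false. Proof. exact: adj_irr HG x. Qed.
Lemma adjneq x y : adj x y -> x != y. Proof. exact: (@adj_neq p G HG x y). Qed.

Lemma emb (x z : 'I_p) (Z3 L : {set 'I_p}) :
  adj x z -> #|Z3| = 3 -> (forall w, w \in Z3 -> adj z w && (w != x)) ->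
  (forall w, w \in L -> [&& adj x w, w != z & w \notin Z3]) -> n - 5 <= #|L| ->
  contains G (T3 n).
Proof.
move=> axz cZ3 HZ HL cL.
set t := take (n - 5) (enum L).
set s := [:: x, z & t] ++ enum Z3.
have st : size t = n - 5 by rewrite /t size_takel // -cardE.
have ss : size s = n by rewrite /s size_cat /= st -cardE cZ3; lia.
have tL : forall w, w \in t -> w \in L by move=> w /mem_take; rewrite mem_enum.
have us : uniq s.
  rewrite /s /= cat_uniq take_uniq ?enum_uniq // andbT.
  have xt : x \notin t by apply/negP => /tL /HL; rewrite adjirr.
  have xZ : x \notin enum Z3.
    by rewrite mem_enum; apply/negP => /HZ; rewrite eqxx andbF.
  have zt : z \notin t by apply/negP => /tL /HL; rewrite eqxx andbF.
  have zZ : z \notin enum Z3 by rewrite mem_enum; apply/negP => /HZ; rewrite adjirr.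
  apply/and4P; split => //.
  - by rewrite in_cons mem_cat !negb_or (adjneq axz) xt xZ.
  - by rewrite mem_cat negb_or zt zZ.
  - apply/hasPn => w; rewrite mem_enum => wZ; apply/negP => /tL /HL.
    by rewrite wZ !andbF.
apply/existsP; exists [ffun i : 'I_n => nth x s i]; apply/andP; split.
  apply/injectiveP => i j; rewrite !ffunE => /eqP.
  by rewrite nth_uniq ?ss ?ltn_ord // => /eqP /val_inj.
apply/forall_inP => e; rewrite inE => /existsP [i /existsP [j /andP [/eqP -> Hij]]].
rewrite imsetU1 imset_set1 !ffunE.
change (adj (nth x s i) (nth x s j)).
case/orP: Hij => /andP [/eqP i0 /andP [j1 j2]].
- rewrite i0 /=.
  have -> : nth x s j = nth x (z :: t) j.-1.
    rewrite /s nth_cat /= st ifT; last lia.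
    by case: (nat_of_ord j) j1.
  have : nth x (z :: t) j.-1 \in z :: t by apply: mem_nth => /=; rewrite st; lia.
  rewrite inE => /orP [/eqP -> // | /tL /HL /andP []//].
- rewrite i0 /=.
  have -> : nth x s j = nth x (enum Z3) (j - (n - 3)).
    by rewrite /s nth_cat /= st ifF; [congr nth; lia | lia].
  have : nth x (enum Z3) (j - (n - 3)) \in enum Z3.
    by apply: mem_nth; rewrite -cardE cZ3; lia.
  by rewrite mem_enum => /HZ /andP [].
Qed.

Lemma lemA (V : {set 'I_p}) x z : x \in V -> z \in N V x -> 4 <= deg V z ->
  minn 3 #|N V z :\: N V x :\ x| + deg V x <= n - 2.
Proof.
move=> xV zNx dz; rewrite leqNgt; apply/negP => H.
apply: (negP Tfree).
set P := N V z :\: N V x :\ x. rewrite -/P in H.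
set R := N V z :\ x.
have axz : adj x z by move: zNx; rewrite inN => /andP [].
have xNz : x \in N V z by rewrite inN xV adjC.
have cR : deg V z = 1 + #|R| by rewrite /deg (cardsD1 x (N V z)) xNz.
have sPR : P \subset R.
  by apply/subsetP => w; rewrite !inE => /andP [-> /andP [_ ->]].
have [P' sP'P cP'] := @ex_subset _ P (minn 3 #|P|) (geq_minr _ _).
have sP'R : P' \subset R by apply: subset_trans sPR.
have [R' sR' cR'] : exists2 R' : {set 'I_p}, R' \subset R :\: P' & #|R'| = 3 - #|P'|.
  apply: ex_subset; rewrite cardsD (setIidPr sP'R) cP'; move: cR dz; clear; lia.
set Z3 := P' :|: R'.
have dPR : P' :&: R' = set0.
  apply/setP => w; rewrite !inE; apply/negP => /andP [w1 w2].
  by move: (subsetP sR' _ w2); rewrite inE w1.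
have cZ3 : #|Z3| = 3 by rewrite /Z3 cardsU dPR cards0 cR' cP'; clear; lia.
have sZR : Z3 \subset R by rewrite /Z3 subUset sP'R (subset_trans sR') // subsetDl.
set L := N V x :\: (z |: Z3).
apply: (emb (x:=x) (z:=z) (Z3:=Z3) (L:=L)) => //.
- move=> w /(subsetP sZR); rewrite !inE => /andP [-> /andP [_ ->]].
  by rewrite andbT.
- move=> w; rewrite !inE negb_or => /andP [/andP [-> ->] /andP [_ ->]].
  by rewrite andbT.
have sI : N V x :&: (z |: Z3) \subset z |: R'.
  apply/subsetP => w; rewrite !inE => /andP [wN /orP [-> // | /orP [wP | ->]]];
    last by rewrite orbT.
  by move: (subsetP sP'P _ wP); rewrite !inE wN andbF.
have c1 := subset_leq_card sI.
have c2 : #|z |: R'| <= 1 + #|R'| by rewrite cardsU1; case: (z \in R').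
rewrite /L cardsD; rewrite /deg in H; move: H c1 c2 cR' cP'; clear; lia.
Qed.

Lemma lemH (V : {set 'I_p}) x z : x \in V -> n - 1 <= deg V x -> z \in N V x -> deg V z <= 3.
Proof.
move=> xV dx zN; rewrite leqNgt; apply/negP => dz.
have := lemA xV zN dz; lia.
Qed.

Lemma lemO (V : {set 'I_p}) x z : x \in V -> z \in N V x -> 4 <= deg V z -> n - 4 <= deg V x ->
  #|N V z :\: N V x :\ x| + deg V x <= n - 2.
Proof. move=> xV zN dz dx; have := lemA xV zN dz; lia. Qed.

Definition Nc (V : {set 'I_p}) u := u |: N V u.

Lemma cardNc (V : {set 'I_p}) u : #|Nc V u| = (deg V u).+1.
Proof. by rewrite /Nc cardsU1 notinN. Qed.

Lemma Nc_sub (V : {set 'I_p}) u : u \in V -> Nc V u \subset V.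
Proof. by move=> uV; rewrite /Nc subUset sub1set uV N_sub. Qed.

Lemma outW (V : {set 'I_p}) u z : N V z :&: (V :\: Nc V u) = N V z :\: N V u :\ u.
Proof.
apply/setP => w; rewrite !inE negb_or.
by case: (w \in V); case: (w != u); case: (adj z w); case: (adj u w).
Qed.

Lemma out_le (V : {set 'I_p}) (S : {set 'I_p}) z : #|N V z :&: S| <= deg V z.
Proof. by apply: subset_leq_card; apply: subsetIl. Qed.

Lemma degsplit (V A : {set 'I_p}) x :
  deg V x = #|N V x :&: A| + #|N V x :&: (V :\: A)|.
Proof.
rewrite /deg -(cardsID A (N V x)); congr (_ + _).
apply: eq_card => y; rewrite !inE.
by case: (y \in A); case: (y \in V); case: (adj x y).
Qed.

Lemma two_le (S : {set 'I_p}) a b : a \in S -> b \in S -> a != b -> 2 <= #|S|.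
Proof.
move=> aS bS ab; have := subset_leq_card (_ : [set a; b] \subset S).
by rewrite cards2 ab; apply; rewrite subUset !sub1set aS bS.
Qed.

Lemma step (V S : {set 'I_p}) c : S \subset V -> #|S| = n - 1 ->
  \sum_(x in S) (deg V x + #|N V x :&: (V :\: S)|) <= (n - 1) * (n - 2) ->
  \sum_(x in V :\: S) deg (V :\: S) x + c <= (n - 2) * #|V :\: S| ->
  \sum_(x in V) deg V x + c <= (n - 2) * #|V|.
Proof.
move=> sSV cS H1 H2.
have cV : #|V| = #|V :\: S| + (n - 1) by rewrite cardsD (setIidPr sSV) cS -cS subnK // subset_leq_card.
rewrite (decomp G sSV) cV mulnDr; lia.
Qed.

Lemma case2 (V : {set 'I_p}) u : u \in V -> deg V u = n - 2 ->
  (forall x, x \in V -> deg V x <= n - 2) ->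
  \sum_(x in Nc V u) (deg V x + #|N V x :&: (V :\: Nc V u)|) <= (n - 1) * (n - 2).
Proof.
move=> uV du Hd.
have cS : #|Nc V u| = n - 1 by rewrite cardNc du; lia.
apply: (@leq_trans (\sum_(x in Nc V u) (n - 2))); last by rewrite sum_nat_const cS.
apply: leq_sum => x xS; rewrite outW.
have xV : x \in V := subsetP (Nc_sub uV) _ xS.
case: (eqVneq x u) => [-> | xu].
  by rewrite setDv set0D cards0 du addn0.
have xN : x \in N V u by move: xS; rewrite /Nc !inE (negbTE xu).
case: (leqP 4 (deg V x)) => dx.
  have := lemO uV xN dx ltac:(rewrite du; clear; lia); have := Hd x xV; move=> h1 h2; move: h2; set a := #|N V x :\: _ :\ _| => h2; move: h1 h2 du; clear; lia.
have h : #|N V x :\: N V u :\ u| <= deg V x.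
  by apply: subset_leq_card; apply/subsetP => y; rewrite !inE => /andP [_ /andP [_ ->]].
move: h; set a := #|N V x :\: _ :\ _| => h; lia.
Qed.

Lemma C1 (V : {set 'I_p}) u : u \in V -> deg V u = n - 3 ->
  (forall x, x \in V -> deg V x <= n - 3) -> V :\: Nc V u != set0 ->
  exists2 b, b \in V :\: Nc V u &
   \sum_(x in Nc V u) (deg V x + #|N V x :&: (V :\: Nc V u)|) <=
      (n - 3) * (n - 2) + 2 * #|N V b :&: Nc V u| + 2.
Proof.
move=> uV du Hd W0.
set A := Nc V u; set W := V :\: A.
have sAV : A \subset V := Nc_sub uV.
have cA : #|A| = n - 2 by rewrite /A cardNc du; move: n10; clear; lia.
have uA : u \in A by rewrite /A /Nc setU11.
have NuA : forall x, x \in N V u -> x \in A by move=> x xN; rewrite /A /Nc setU1r.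
have AV : forall x, x \in A -> x \in V := subsetP sAV.
have WA : forall x, x \in W -> x \notin A by move=> x; rewrite inE => /andP [].
have WV : forall x, x \in W -> x \in V by move=> x; rewrite inE => /andP [].
have dsp : forall x, deg V x = #|N V x :&: A| + #|N V x :&: W| := fun x => degsplit V A x.
have out1 : forall x, x \in N V u -> 4 <= deg V x -> #|N V x :&: W| <= 1.
  move=> x xN dx; rewrite /W /A outW.
  have := lemO uV xN dx ltac:(rewrite du; clear; lia); rewrite du.
  move: (#|_|) n10 => a; clear; lia.
set Z := [set x in N V u | (deg V x == n - 3) && (#|N V x :&: W| == 1)].
have ZN : forall x, x \in Z -> x \in N V u by move=> x; rewrite inE => /andP [].
have Zd : forall x, x \in Z -> deg V x = n - 3.
  by move=> x; rewrite inE => /andP [_ /andP [/eqP]].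
have Zo : forall x, x \in Z -> #|N V x :&: W| = 1.
  by move=> x; rewrite inE => /andP [_ /andP [_ /eqP]].
have ZA : forall x, x \in Z -> x \in A by move=> x /ZN /NuA.
have PB : forall x, x \in A -> deg V x + #|N V x :&: W| <= n - 3 + (x \in Z).
  move=> x xA.
  case: (eqVneq x u) => [-> | xu].
    have -> : N V u :&: W = set0.
      apply/setP => y; rewrite [in RHS]inE; apply/negP; rewrite inE => /andP [yN yW].
      by move: (WA y yW); rewrite (NuA y yN).
    by rewrite cards0 du addn0 leq_addr.
  have xN : x \in N V u by move: xA; rewrite /A /Nc !inE (negbTE xu).
  have hd := Hd x (AV x xA).
  case: (leqP 4 (deg V x)) => dx.
    have ho := out1 x xN dx.
    case: (boolP (x \in Z)) => xZ.
      move: hd ho; rewrite /= addn1; move: (deg V x) (#|_|) => a b; clear; lia.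
    move: xZ; rewrite inE xN /= => /nandP [/eqP h | /eqP h];
      move: hd ho h; move: (deg V x) (#|_|) n10 => a b; clear; lia.
  have := out_le V W x; move: dx n10; move: (deg V x) (#|_|) => a b; clear; lia.
have sZA : Z \subset A by apply/subsetP => x /ZA.
have hsum : \sum_(x in A) (n - 3 + (x \in Z)) = (n - 3) * (n - 2) + #|Z|.
  rewrite big_split /= sum_nat_const cA.
  rewrite -(cardsum A (fun y => y \in Z)) (_ : [set y in A | y \in Z] = Z); first by rewrite mulnC.
  by apply/setP => y; rewrite inE; case yZ: (y \in Z); rewrite ?andbF // (ZA y yZ).
have sumPB : \sum_(x in A) (deg V x + #|N V x :&: W|) <= (n - 3) * (n - 2) + #|Z|.
  by rewrite -hsum; apply: leq_sum.
have NNc : forall c, c \in Z -> #|(A :\ c) :\: N V c| = 1.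
  move=> c cZ; have cA' := ZA c cZ.
  have e1 : (A :\ c) :&: N V c = N V c :&: A.
    apply/setP => y; rewrite !inE; case: (eqVneq y c) => [-> | ] /=.
      by rewrite adjirr !andbF.
    by rewrite andbC.
  rewrite cardsD e1; have := dsp c; rewrite Zd // Zo // => h.
  have := cardsD1 c A; rewrite cA' cA => h2.
  move: h h2 n10; move: (#|N V c :&: A|) (#|A :\ c|) => a b; clear; lia.
have Z2 : forall c z, c \in Z -> z \in N V c -> 4 <= deg V z -> #|N V z :\: N V c :\ c| <= 1.
  move=> c z cZ zN dz.
  have := lemO (AV c (ZA c cZ)) zN dz ltac:(rewrite Zd //; clear -n10; lia); rewrite Zd //.
  move: (#|_|) n10 => a; clear; lia.
have DIFF : forall c z t, c \in Z -> z \in Z -> adj c z -> (N V z :&: W) != (N V c :&: W) ->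
    t \in A -> adj z t -> ~~ adj c t -> t != c -> False.
  move=> c z t cZ zZ acz Hne tA azt nact tc.
  have [bz Ebz] : exists bz, N V z :&: W = [set bz] by apply/cards1P; rewrite Zo.
  have [bc Ebc] : exists bc, N V c :&: W = [set bc] by apply/cards1P; rewrite Zo.
  have bzW : bz \in N V z :&: W by rewrite Ebz set11.
  have bzNc : bz \notin N V c.
    apply/negP => h; have : bz \in N V c :&: W by rewrite inE h; move: bzW; rewrite inE => /andP [].
    rewrite Ebc => /set1P E; move: Hne; by rewrite Ebz Ebc E eqxx.
  move: bzW; rewrite inE => /andP [bzN bzW].
  have zN : z \in N V c by rewrite inN (AV z (ZA z zZ)) acz.
  have := Z2 c z cZ zN ltac:(rewrite Zd //; clear -n10; lia).
  have bzc : bz != c by apply: contraNneq (WA bz bzW) => ->; exact: ZA.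
  have bzt : bz != t by apply: contraNneq (WA bz bzW) => ->.
  have m1 : bz \in N V z :\: N V c :\ c by rewrite in_setD1 in_setD bzNc bzN bzc.
  have m2 : t \in N V z :\: N V c :\ c.
    by rewrite in_setD1 in_setD !inN (negbTE nact) (AV t tA) azt tc andbF.
  have := two_le m1 m2 bzt; move: (#|_|); clear => a; lia.
have NNm : forall c y, y \in A -> y != c -> ~~ adj c y -> y \in (A :\ c) :\: N V c.
  by move=> c y yA yc nacy; rewrite in_setD in_setD1 inN negb_and nacy orbT yc yA.
have NNeq : forall c y1 y2, c \in Z -> y1 \in (A :\ c) :\: N V c -> y2 \in (A :\ c) :\: N V c -> y1 = y2.
  by move=> c y1 y2 cZ h1 h2; move/card_le1_eqP: (eq_leq (NNc c cZ)) => /(_ y1 y2 h1 h2).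
have NNinv : forall c y, y \in (A :\ c) :\: N V c -> [/\ y \in A, y != c & ~~ adj c y].
  move=> c y; rewrite in_setD in_setD1 inN => /andP [h /andP [yc yA]].
  by move: h; rewrite (AV y yA) /= => h; split.
case: (boolP [forall v in Z, forall w in Z, (N V v :&: W) == (N V w :&: W)]) => Hall.
  case: (set_0Vmem Z) => [Z0 | [v vZ]].
    case: (set_0Vmem W) => [W00 | [b bW]]; first by move: W0; rewrite -/A -/W W00 eqxx.
    exists b => //.
    apply: leq_trans sumPB _; rewrite Z0 cards0 addn0 -addnA leq_addr //.
  have [b Eb] : exists b, N V v :&: W = [set b] by apply/cards1P; rewrite Zo.
  have bv : b \in N V v :&: W by rewrite Eb set11.
  have bW : b \in W by move: bv; rewrite inE => /andP [].
  exists b => //.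
  have sZ : Z \subset N V b :&: A.
    apply/subsetP => z zZ.
    have : (N V z :&: W) == (N V v :&: W).
      by move/forall_inP: Hall => /(_ z zZ) /forall_inP /(_ v vZ).
    rewrite Eb => /eqP Ez.
    have : b \in N V z :&: W by rewrite Ez set11.
    rewrite inE inN => /andP [/andP [_ azb] _].
    by rewrite inE inN (AV z (ZA z zZ)) adjC azb ZA.
  have := subset_leq_card sZ; move: sumPB; move: (\sum_(x in A) _) (#|Z|) (#|_ :&: A|).
  by clear => a1 a2 a3; lia.
move/forall_inPn: Hall => [v vZ /forall_inPn [w wZ Hvw]].
have [b Eb] : exists b, N V v :&: W = [set b] by apply/cards1P; rewrite Zo.
have bv : b \in N V v :&: W by rewrite Eb set11.
have bW : b \in W by move: bv; rewrite inE => /andP [].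
exists b => //.
have eb : 1 <= #|N V b :&: A|.
  apply/card_gt0P; exists v; move: bv; rewrite inE inN => /andP [/andP [_ avb] _].
  by rewrite inE inN (AV v (ZA v vZ)) adjC avb ZA.
suff : \sum_(x in A) (deg V x + #|N V x :&: W|) <= (n - 3) * (n - 2) + 4.
  by move: eb; move: (\sum_(x in A) _) (#|_ :&: A|); clear => a1 a2; lia.
have vw : v != w by apply: contraNneq Hvw => ->; rewrite eqxx.
have wv : w != v by rewrite eq_sym.
case: (boolP (adj v w)) => avw; last first.
  have nawv : ~~ adj w v by rewrite adjC.
  have sZ : Z \subset [set v; w].
    apply/subsetP => z zZ; rewrite !inE; apply/negPn/negP => /norP [zv zw].
    have avz : adj v z.
      apply/negPn/negP => navz.
      have := NNeq v z w vZ (NNm v z (ZA z zZ) zv navz) (NNm v w (ZA w wZ) wv avw).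
      by move=> E; move: zw; rewrite E eqxx.
    have awz : adj w z.
      apply/negPn/negP => nawz.
      have := NNeq w z v wZ (NNm w z (ZA z zZ) zw nawz) (NNm w v (ZA v vZ) vw nawv).
      by move=> E; move: zv; rewrite E eqxx.
    case: (eqVneq (N V z :&: W) (N V v :&: W)) => Ezv.
      apply: (DIFF w z v wZ zZ awz _ (ZA v vZ) _ _ vw).
      - by rewrite Ezv.
      - by rewrite adjC.
      - by rewrite adjC.
    apply: (DIFF v z w vZ zZ avz Ezv (ZA w wZ) _ avw); last by rewrite eq_sym.
    by rewrite adjC.
  have := subset_leq_card sZ; rewrite cards2; move: sumPB.
  move: (\sum_(x in A) _) (#|Z|) (v != w) => a1 a2 [] /=; clear; lia.
have [y Ey] : exists y, (A :\ v) :\: N V v = [set y] by apply/cards1P; rewrite NNc.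
have yNN : y \in (A :\ v) :\: N V v by rewrite Ey set11.
have [yA yv navy] := NNinv v y yNN.
have avu : adj v u by rewrite adjC; move: (ZN v vZ); rewrite inN => /andP [].
have yu : y != u by apply: contraNneq navy => ->.
have yN : y \in N V u by move: yA; rewrite /A /Nc in_setU1 (negbTE yu).
have nawy : ~~ adj w y.
  apply/negP => awy; apply: (DIFF v w y vZ wZ avw _ yA awy navy yv).
  by rewrite eq_sym.
have yw : y != w by apply: contraNneq navy => ->.
have vy : v != y by rewrite eq_sym.
have wy : w != y by rewrite eq_sym.
have nayv : ~~ adj y v by rewrite adjC.
have nayw : ~~ adj y w by rewrite adjC.
have yZ : y \notin Z.
  apply/negP => yZ.
  have := NNeq y v w yZ (NNm y v (ZA v vZ) vy nayv) (NNm y w (ZA w wZ) wy nayw).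
  by move=> E; move: vw; rewrite E eqxx.
have nyZ : forall z, z \in Z -> ~~ adj y z.
  move=> z zZ.
  have key : forall c, c \in Z -> ~~ adj c y -> y != c -> (N V z :&: W) != (N V c :&: W) ->
      ~~ adj y z.
    move=> c cZ nacy yc Hne; apply/negP => ayz.
    have acz : adj c z.
      apply/negPn/negP => nacz.
      have zc : z != c by apply: contraNneq Hne => ->; rewrite eqxx.
      have := NNeq c z y cZ (NNm c z (ZA z zZ) zc nacz) (NNm c y yA yc nacy).
      by move=> E; move: yZ; rewrite -E zZ.
    by apply: (DIFF c z y cZ zZ acz Hne yA _ nacy yc); rewrite adjC.
  case: (eqVneq (N V z :&: W) (N V v :&: W)) => Ezv.
    by apply: (key w wZ nawy yw); rewrite Ezv.
  exact: (key v vZ navy yv Ezv).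
have fy : deg V y + #|N V y :&: W| + #|Z| <= n + 1.
  have h1 : N V y :&: A \subset (A :\ y) :\: Z.
    apply/subsetP => x; rewrite inE inN => /andP [/andP [xV ayx] xA].
    rewrite in_setD in_setD1 xA andbT; apply/andP; split.
      by apply/negP => /nyZ; rewrite ayx.
    by apply: contraTneq ayx => ->; rewrite adjirr.
  have sZy : Z \subset A :\ y.
    apply/subsetP => z zZ; rewrite in_setD1 (ZA z zZ) andbT.
    by apply: contraNneq yZ => <-.
  have h2 : #|(A :\ y) :\: Z| = #|A :\ y| - #|Z| by rewrite cardsD (setIidPr sZy).
  have h2' := subset_leq_card sZy.
  have h2'' : #|A :\ y| = n - 3 by have := cardsD1 y A; rewrite yA cA /=; move: n10; clear; lia.
  have h3 : #|N V y :&: W| <= 2.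
    case: (leqP 4 (deg V y)) => dy.
      by have := out1 y yN dy; move: (#|_|); clear => a; lia.
    have uy : u \in N V y :&: A by rewrite inE inN uV adjC; move: yN; rewrite inN => /andP [_ ->].
    have := dsp y; have : 0 < #|N V y :&: A| by apply/card_gt0P; exists u.
    move: dy; rewrite /deg; move: (#|N V y|) (#|N V y :&: A|) (#|N V y :&: W|).
    by clear => a1 a2 a3; lia.
  have h4 := subset_leq_card h1.
  have := dsp y; move: h1 h2 h2' h2'' h3 h4 n10.
  move: (deg V y) (#|N V y :&: A|) (#|N V y :&: W|) (#|(A :\ y) :\: Z|) (#|A :\ y|) (#|Z|).
  by clear => a1 a2 a3 a4 a5 a6 _; lia.
rewrite (bigD1 y yA) /=.
have hs := hsum; rewrite (bigD1 y yA) /= (negbTE yZ) addn0 in hs.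
have le' : \sum_(x in A | x != y) (deg V x + #|N V x :&: W|) <=
           \sum_(x in A | x != y) (n - 3 + (x \in Z)).
  by apply: leq_sum => x /andP [xA _]; exact: PB.
move: fy hs le' n10.
move: (\sum_(x in A | x != y) (deg V x + _)) (\sum_(x in A | x != y) (n - 3 + _)).
move: (deg V y) (#|N V y :&: W|) (#|Z|).
by clear => a1 a2 a3 a4 a5; lia.


Qed.

Lemma leq_sum_sub (P Q : pred 'I_p) (F H : 'I_p -> nat) :
  (forall i, P i -> Q i) -> (forall i, P i -> F i <= H i) ->
  \sum_(i | P i) F i <= \sum_(i | Q i) H i.
Proof.
move=> PQ FH; rewrite [X in X <= _]big_mkcond [X in _ <= X]big_mkcond /=.
apply: leq_sum => i _; case Pi: (P i); first by rewrite (PQ i Pi) FH.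
by case: (Q i).
Qed.

Lemma sum_le (S V : {set 'I_p}) d : (forall x, x \in S -> deg V x <= d) ->
  \sum_(x in S) deg V x <= d * #|S|.
Proof. by move=> H; rewrite mulnC -sum_nat_const; apply: leq_sum. Qed.

Lemma case3 (V : {set 'I_p}) u : u \in V -> deg V u = n - 3 ->
  (forall x, x \in V -> deg V x <= n - 3) -> V :\: Nc V u != set0 ->
  exists2 b, b \in V :\: Nc V u &
   \sum_(x in b |: Nc V u) (deg V x + #|N V x :&: (V :\: (b |: Nc V u))|) <= (n - 1) * (n - 2).
Proof.
move=> uV du Hd W0.
have [b bW Hb] := C1 uV du Hd W0.
exists b => //.
set A := Nc V u in bW Hb *; set W := V :\: A in bW Hb *.
have sAV : A \subset V := Nc_sub uV.
have bA : b \notin A by move: bW; rewrite inE => /andP [].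
have bV : b \in V by move: bW; rewrite inE => /andP [].
have eW : V :\: (b |: A) = W :\ b.
  by apply/setP => y; rewrite !inE negb_or andbA.
rewrite big_setU1 //= eW.
have e1 : forall x, x \in A -> #|N V x :&: W| = adj x b + #|N V x :&: (W :\ b)|.
  move=> x xA; rewrite (cardsD1 b (N V x :&: W)); congr (_ + _).
    by rewrite inE inN bV bW andbT.
  by apply: eq_card => y; rewrite !inE; case: (y == b); rewrite ?andbF.
have e2 : \sum_(x in A) (deg V x + #|N V x :&: W|) =
          \sum_(x in A) (deg V x + #|N V x :&: (W :\ b)|) + #|N V b :&: A|.
  rewrite (NI _ _ sAV) cardsum -big_split /=; apply: eq_bigr => x xA.
  by rewrite e1 // adjC addnA addnAC.
have e3 : deg V b = #|N V b :&: A| + #|N V b :&: (W :\ b)|.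
  rewrite (degsplit V A b) -/W; congr (_ + _).
  by apply: eq_card => y; rewrite !inE; case: (eqVneq y b) => [->|]; rewrite ?adjirr ?andbF.
have hb := Hd b bV.
move: Hb; rewrite e2; move: e3 hb n10.
move: (deg V b) (#|N V b :&: A|) (#|N V b :&: (W :\ b)|) (\sum_(x in A) (deg V x + _)).
by clear => a1 a2 a3 a4; nia.
Qed.

Lemma caseH (V : {set 'I_p}) x0 : x0 \in V -> n - 1 <= deg V x0 ->
  \sum_(x in V) deg V x + 5 * (n - 6) <= (n - 2) * #|V|.
Proof.
move=> x0V dx0.
set Hs := [set x in V | n - 1 <= deg V x].
set Qs := [set x in V | deg V x <= 3].
have x0H : x0 \in Hs by rewrite inE x0V dx0.
have NH : forall h, h \in Hs -> N V h \subset Qs.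
  move=> h; rewrite inE => /andP [hV dh]; apply/subsetP => z zN.
  by rewrite inE (subsetP (N_sub G V h) _ zN) (lemH hV dh zN).
have cQ : n - 1 <= #|Qs| by apply: leq_trans dx0 _; apply: subset_leq_card; exact: NH.
have sHV : Hs \subset V by apply/subsetP => x; rewrite inE => /andP [].
have sQV : Qs \subset V by apply/subsetP => x; rewrite inE => /andP [].
have sQ : Qs \subset V :\: Hs.
  apply/subsetP => x; rewrite !inE => /andP [xV dx]; rewrite xV andbT -ltnNge.
  by move: dx n10; clear; lia.
rewrite (big_setID Hs) /= (setIidPr sHV).
have h1 : \sum_(x in Hs) deg V x <= 3 * #|Qs|.
  rewrite (eq_bigr (fun h => #|N V h :&: Qs|)); last first.
    by move=> h hH; rewrite /deg (setIidPl (NH h hH)).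
  rewrite (dc G sHV sQV); apply: (@leq_trans (\sum_(q in Qs) deg V q)).
    by apply: leq_sum => q _; apply: out_le.
  by apply: sum_le => q; rewrite inE => /andP [].
rewrite [X in _ + X + _](big_setID Qs) /= (setIidPr sQ).
have h2 : \sum_(x in Qs) deg V x <= 3 * #|Qs| by apply: sum_le => q; rewrite inE => /andP [].
have h3 : \sum_(x in (V :\: Hs) :\: Qs) deg V x <= (n - 2) * #|(V :\: Hs) :\: Qs|.
  apply: sum_le => x; rewrite !inE => /andP [_ /andP [xH xV]].
  by move: xH; rewrite xV /= -ltnNge; move: n10; clear; lia.
have c1 : #|V| = #|Hs| + #|V :\: Hs| by rewrite -(cardsID Hs V) (setIidPr sHV).
have c2 : #|V :\: Hs| = #|Qs| + #|(V :\: Hs) :\: Qs| by rewrite -(cardsID Qs (V :\: Hs)) (setIidPr sQ).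
have c3 : 0 < #|Hs| by apply/card_gt0P; exists x0.
move: h1 h2 h3 c1 c2 c3 cQ n10.
move: (\sum_(x in Hs) _) (\sum_(x in Qs) _) (\sum_(x in (V :\: Hs) :\: Qs) _).
move: #|V| #|Hs| #|V :\: Hs| #|Qs| #|(V :\: Hs) :\: Qs|.
by clear => a1 a2 a3 a4 a5 b1 b2 b3; nia.
Qed.

Lemma case4 (V : {set 'I_p}) u : u \in V -> deg V u = n - 4 ->
  (forall x, x \in V -> deg V x <= n - 4) -> #|V| = 2 * n - 7 ->
  \sum_(x in V) deg V x + 5 * (n - 6) <= (n - 2) * #|V|.
Proof.
move=> uV du Hd cV.
set A := Nc V u; set W := V :\: A.
have sAV : A \subset V := Nc_sub uV.
have cA : #|A| = n - 3 by rewrite /A cardNc du; move: n10; clear; lia.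
have cW : #|W| = n - 4 by rewrite /W cardsD (setIidPr sAV) cA cV; move: n10; clear; lia.
have uA : u \in A by rewrite /A /Nc setU11.
have AV : forall x, x \in A -> x \in V := subsetP sAV.
have WA : forall x, x \in W -> x \notin A by move=> x; rewrite inE => /andP [].
have WV : forall x, x \in W -> x \in V by move=> x; rewrite inE => /andP [].
have sWV : W \subset V := subsetDl V A.
have dsp : forall x, deg V x = #|N V x :&: A| + #|N V x :&: W| := fun x => degsplit V A x.
have AN : forall x, x \in A -> x != u -> x \in N V u.
  by move=> x; rewrite /A /Nc in_setU1 => /orP [/eqP -> | //]; rewrite eqxx.
have uNx : forall x, x \in A -> x != u -> u \in N V x :&: A.
  move=> x xA xu; rewrite inE uA andbT inN uV adjC.
  by move: (AN x xA xu); rewrite inN => /andP [].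
have outA : forall x, x \in A -> #|N V x :&: W| <= 2.
  move=> x xA; case: (eqVneq x u) => [-> | xu].
    rewrite (_ : N V u :&: W = set0) ?cards0 //.
    apply/setP => y; rewrite [in RHS]inE; apply/negP; rewrite inE => /andP [yN yW].
    by move: (WA y yW); rewrite /A /Nc setU1r.
  have xN := AN x xA xu.
  case: (leqP 4 (deg V x)) => dx.
    rewrite /W /A outW; have := lemO uV xN dx ltac:(rewrite du; clear; lia); rewrite du.
    by move: (#|_|) n10; clear => a; lia.
  have : 0 < #|N V x :&: A| by apply/card_gt0P; exists u; exact: uNx.
  have := dsp x; move: dx; rewrite /deg; move: #|N V x| #|N V x :&: A| #|N V x :&: W|.
  by clear => a1 a2 a3; lia.
pose sg x := n - 4 - deg V x.
have hA : \sum_(x in A) deg V x + \sum_(x in A) sg x = (n - 4) * (n - 3).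
  rewrite -big_split /= -cA mulnC -sum_nat_const; apply: eq_bigr => x xA.
  by rewrite /sg; have := Hd x (AV x xA); move: (deg V x); clear => a; lia.
set W2 := [set b in W | deg V b == n - 4].
have hW : \sum_(x in W) deg V x <= (n - 5) * (n - 4) + #|W2|.
  apply: (@leq_trans (\sum_(x in W) (n - 5 + (x \in W2)))).
    apply: leq_sum => x xW; rewrite inE xW /=; have := Hd x (WV x xW).
    by case: eqP => /=; move: (deg V x) n10; clear => a; lia.
  rewrite big_split /= sum_nat_const cW -(cardsum W (fun y => y \in W2)).
  rewrite (_ : [set y in W | y \in W2] = W2); first by rewrite mulnC.
  apply/setP => y; rewrite [in LHS]inE; case yW2: (y \in W2); rewrite ?andbF ?andbT //.
  by move: yW2; rewrite inE => /andP [].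
have key : #|W2| <= 12 + \sum_(x in A) sg x.
  have W2W : forall b, b \in W2 -> b \in W by move=> b; rewrite inE => /andP [].
  have W2d : forall b, b \in W2 -> deg V b = n - 4 by move=> b; rewrite inE => /andP [_ /eqP].
  have W2e : forall b, b \in W2 -> 0 < #|N V b :&: A|.
    move=> b bW2; have := dsp b; rewrite W2d //.
    have : #|N V b :&: W| < #|W|.
      apply: proper_card; apply/properP; split; first exact: subsetIr.
      by exists b; [exact: W2W | rewrite inE inN adjirr andbF].
    by rewrite cW; move: (#|N V b :&: A|) (#|N V b :&: W|) n10; clear => a1 a2; lia.
  set W2Q := [set b in W2 | [forall x in N V b :&: A, deg V x <= 3]].
  set W2' := W2 :\: W2Q.
  have sQ2 : W2Q \subset W2 by apply/subsetP => b; rewrite inE => /andP [].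
  have sW2V : W2 \subset V by apply/subsetP => b /W2W /WV.
  have sW2QV : W2Q \subset V := subset_trans sQ2 sW2V.
  have cW2 : #|W2| = #|W2Q| + #|W2'| by rewrite -(cardsID W2Q W2) (setIidPr sQ2).
  rewrite (bigID (fun x => deg V x <= 3)) /=.
  have ha : #|W2Q| <= \sum_(x in A | deg V x <= 3) sg x.
    apply: (@leq_trans (\sum_(b in W2Q) #|N V b :&: A|)).
      rewrite -sum1_card; apply: leq_sum => b bQ; apply: W2e; exact: (subsetP sQ2).
    rewrite (dc G sW2QV sAV) [X in _ <= X]big_mkcondr /=.
    apply: leq_sum => x xA.
    case: (leqP (deg V x) 3) => dx.
      have : #|N V x :&: W2Q| <= #|N V x :&: W|.
        apply: subset_leq_card; apply: setIS; apply/subsetP => b /(subsetP sQ2); exact: W2W.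
      have := outA x xA; rewrite /sg; move: dx n10; move: (deg V x) (#|_ :&: W2Q|) (#|_ :&: W|).
      by clear => a1 a2 a3; lia.
    rewrite (_ : N V x :&: W2Q = set0) ?cards0 //.
    apply/setP => b; rewrite [in RHS]inE; apply/negP; rewrite inE => /andP [bN bQ].
    move: bQ; rewrite inE => /andP [_ /forall_inP /(_ x)].
    rewrite inE inN (AV x xA) xA andbT adjC; move: bN; rewrite inN => /andP [_ ->].
    by move=> /(_ isT); rewrite leqNgt dx.
  have hb : #|W2'| <= 12 + \sum_(x in A | ~~ (deg V x <= 3)) sg x.
    pose vb b := odflt u [pick x in N V b :&: A | 4 <= deg V x].
    have vbP : forall b, b \in W2' -> [/\ vb b \in N V b :&: A, 4 <= deg V (vb b) &
                                         n - 8 <= #|N V b :&: A| + sg (vb b)].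
      move=> b; rewrite inE => /andP [bnQ bW2].
      have bW := W2W b bW2; have bV := WV b bW.
      rewrite /vb; case: pickP => [x /andP [xin dx] | H]; last first.
        exfalso; move: bnQ; rewrite inE bW2 /= => /forall_inPn [x xin dx].
        by move: (H x); rewrite xin /= ltnNge dx.
      rewrite /= xin dx; split => //.
      move: xin; rewrite inE inN => /andP [/andP [xV abx] xA].
      have xu : x != u.
        apply: contraNneq (WA b bW) => E; rewrite /A /Nc setU1r // inN bV adjC -E abx //=.
      have xN := AN x xA xu.
      have xNb : x \in N V b by rewrite inN xV abx.
      have h1 := lemO bV xNb dx ltac:(rewrite W2d //; clear; lia).
      rewrite W2d // in h1.
      have h2 := outA x xA.
      have h3 : N V x :&: A \subset (N V b :&: A) :|: (N V x :\: N V b :\ b).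
        apply/subsetP => y; rewrite inE => /andP [yN yA].
        rewrite in_setU in_setI in_setD1 in_setD yA yN !andbT.
        case: (boolP (y \in N V b)) => //= _; rewrite andbT.
        by apply: contraNneq (WA b bW) => <-.
      have h4 := subset_leq_card h3; rewrite cardsU in h4.
      have := dsp x; have := Hd x xV; rewrite /sg; move: h1 h2 h4 n10.
      move: (deg V x) (#|N V x :&: A|) (#|N V x :&: W|) (#|N V b :&: A|)
            (#|N V x :\: N V b :\ b|) (#|(N V b :&: A) :&: (N V x :\: N V b :\ b)|).
      by clear => a1 a2 a3 a4 a5 a6; lia.
    have hs1 : #|W2'| * (n - 8) <= \sum_(b in W2') #|N V b :&: A| + \sum_(b in W2') sg (vb b).
      rewrite -big_split /= -sum_nat_const; apply: leq_sum => b bW.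
      by case: (vbP b bW).
    have hs2 : \sum_(b in W2') #|N V b :&: A| <= 2 * (n - 3).
      apply: (@leq_trans (\sum_(b in W) #|N V b :&: A|)).
        by apply: leq_sum_sub => // b; rewrite inE => /andP [_ /W2W].
      rewrite (dc G sWV sAV) -cA mulnC -sum_nat_const; apply: leq_sum => x xA.
      exact: outA.
    have hs3 : \sum_(b in W2') sg (vb b) <= 2 * \sum_(x in A | ~~ (deg V x <= 3)) sg x.
      rewrite (partition_big vb (fun x => (x \in A) && ~~ (deg V x <= 3))) /=; last first.
        move=> b bW; case: (vbP b bW) => /setIP [_ ->] + _.
        by rewrite -ltnNge.
      rewrite big_distrr /=; apply: leq_sum => x /andP [xA dx].
      apply: (@leq_trans (\sum_(b in N V x :&: W) sg x)).
        apply: leq_sum_sub => b /andP [bW /eqP vbx]; last by rewrite vbx.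
        case: (vbP b bW); rewrite vbx => /setIP [xNb _] _ _.
        move: bW; rewrite inE => /andP [_ /W2W bW].
        by rewrite inE inN (WV b bW) bW andbT adjC; move: xNb; rewrite inN => /andP [].
      by rewrite sum_nat_const; apply: leq_mul => //; exact: outA.
    move: hs1 hs2 hs3 n10.
    move: #|W2'| (\sum_(b in W2') #|_|) (\sum_(b in W2') sg (vb b))
          (\sum_(x in A | ~~ (deg V x <= 3)) sg x).
    by clear => a1 a2 a3 a4; nia.
  by move: cW2 ha hb; move: #|W2| #|W2Q| #|W2'| (\sum_(x in A | _) sg x) (\sum_(x in A | ~~ _) sg x); clear => *; lia.
rewrite (big_setID A) /= (setIidPr sAV) -/W.
move: hA hW key cV n10.
move: (\sum_(x in A) deg V x) (\sum_(x in A) sg x) (\sum_(x in W) deg V x) #|W2| #|V|.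
by clear => a1 a2 a3 a4 a5; nia.
Qed.

Lemma base (V : {set 'I_p}) : #|V| = n - 6 ->
  \sum_(x in V) deg V x + 5 * (n - 6) <= (n - 2) * #|V|.
Proof.
move=> cV.
have : \sum_(x in V) deg V x <= (n - 7) * #|V|.
  apply: sum_le => x xV; have := deg_le HG xV; rewrite cV.
  by move: (deg V x) n10; clear => a; lia.
by rewrite cV; move: (\sum_(x in V) _) n10; clear => a; nia.
Qed.

Lemma key k : forall V : {set 'I_p}, #|V| = k * (n - 1) + (n - 6) ->
  \sum_(x in V) deg V x + 5 * (n - 6) <= (n - 2) * #|V|.
Proof.
elim: k => [|k IH] V cV; first by apply: base; rewrite cV mul0n.
have V0 : 0 < #|V| by rewrite cV; move: n10; clear; nia.
have [u uV Eu] := eq_bigmax_cond (deg V) V0.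
have Hd : forall x, x \in V -> deg V x <= deg V u.
  by move=> x xV; rewrite -Eu; exact: leq_bigmax_cond.
have cVk : #|V| = k * (n - 1) + (n - 6) + (n - 1) by rewrite cV mulSn; move: n10; clear; lia.
case: (leqP (n - 1) (deg V u)) => h1; first exact: (caseH uV h1).
case: (eqVneq (deg V u) (n - 2)) => h2.
  have sSV := Nc_sub uV.
  have cS : #|Nc V u| = n - 1 by rewrite cardNc h2; move: n10; clear; lia.
  apply: (step sSV cS).
    by apply: case2 => // x xV; rewrite -h2; apply: Hd.
  apply: IH; rewrite cardsD (setIidPr sSV) cS cVk.
  by rewrite addnK.
case: (eqVneq (deg V u) (n - 3)) => h3.
  have W0 : V :\: Nc V u != set0.
    rewrite -card_gt0 cardsD (setIidPr (Nc_sub uV)) cardNc h3 cVk.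
    by move: n10; clear; nia.
  have Hd3 : forall x, x \in V -> deg V x <= n - 3 by move=> x xV; rewrite -h3; apply: Hd.
  have [b bW Hb] := case3 uV h3 Hd3 W0.
  have bV : b \in V by move: bW; rewrite inE => /andP [].
  have bNc : b \notin Nc V u by move: bW; rewrite inE => /andP [].
  have sSV : b |: Nc V u \subset V by rewrite subUset sub1set bV Nc_sub.
  have cS : #|b |: Nc V u| = n - 1 by rewrite cardsU1 bNc cardNc h3; move: n10; clear; lia.
  apply: (step sSV cS Hb).
  apply: IH; rewrite cardsD (setIidPr sSV) cS cVk.
  by rewrite addnK.
case: (eqVneq (deg V u) (n - 4)) => h4.
  case: k IH cV cVk => [|k] IH cV cVk.
    apply: (case4 uV h4) => [x xV|]; first by rewrite -h4; apply: Hd.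
    by rewrite cV; move: n10; clear; lia.
  have Hd4 : forall x, x \in V -> deg V x <= n - 4 by move=> x xV; rewrite -h4; apply: Hd.
  have := sum_le Hd4.
  rewrite cV; move: (\sum_(x in V) _) n10; clear => a; nia.
have Hd5 : forall x, x \in V -> deg V x <= n - 5.
  by move=> x xV; apply: leq_trans (Hd x xV) _; move: h1 h2 h3 h4; clear; lia.
have := sum_le Hd5.
rewrite cV; move: (\sum_(x in V) _) n10; clear => a; nia.
Qed.

End Main.

Lemma cardsumT (T : finType) (A : {set T}) (P : pred T) :
  #|[set y in A | P y]| = \sum_(y in A) P y.
Proof.
rewrite -sum1_card [LHS]big_mkcond [RHS]big_mkcond /=.
apply: eq_bigr => i _; rewrite !inE.
by case: (i \in A) => //=; case: (P i).
Qed.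

Lemma handshake p (G : {set {set 'I_p}}) : is_graph G ->
  \sum_(x in [set: 'I_p]) deg G [set: 'I_p] x = 2 * #|G|.
Proof.
move=> HG.
have e1 : forall x, deg G [set: 'I_p] x = #|[set e in G | x \in e]|.
  move=> x; rewrite /deg.
  have -> : [set e in G | x \in e] = (fun y => [set x; y]) @: N G [set: 'I_p] x.
    apply/setP => e; apply/idP/idP.
    - rewrite inE => /andP [eG xe].
      move/forall_inP: HG => /(_ e eG) /cards2P [a [b [ab Ee]]].
      move: xe; rewrite Ee !inE => /orP [/eqP xa | /eqP xb].
      + apply/imsetP; exists b; last by rewrite xa.
        by rewrite inN in_setT /adj xa -Ee.
      + apply/imsetP; exists a; last by rewrite xb setUC.
        by rewrite inN in_setT /adj xb setUC -Ee.
    - case/imsetP => y; rewrite inN in_setT /= => axy ->.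
      by rewrite inE; apply/andP; split; [exact: axy | rewrite !inE eqxx].
  rewrite card_in_imset // => y1 y2; rewrite !inN !in_setT /= => a1 a2 E.
  have : y1 \in [set x; y2] by rewrite -E !inE eqxx orbT.
  rewrite !inE => /orP [/eqP y1x | /eqP //].
  by move: a1; rewrite y1x (adj_irr HG).
rewrite (eq_bigr _ (fun x _ => e1 x)).
rewrite (eq_bigr (fun x => \sum_(e in G) (x \in e))); last by move=> x _; rewrite cardsumT.
rewrite exchange_big /= mulnC -sum_nat_const; apply: eq_bigr => e eG.
rewrite -(cardsumT [set: 'I_p] (fun y => y \in e)) (_ : [set y in [set: 'I_p] | y \in e] = e).
  by move/forall_inP: HG => /(_ e eG) /eqP.
by apply/setP => y; rewrite !inE.
Qed.

Definition G0 p m : {set {set 'I_p}} :=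
  [set e : {set 'I_p} | [exists x : 'I_p, exists y : 'I_p,
     [&& x != y, x %/ m == y %/ m & e == [set x; y]]]].

Lemma G0graph p m : is_graph (G0 p m).
Proof.
apply/forall_inP => e; rewrite inE => /existsP [x /existsP [y /and3P [xy _ /eqP ->]]].
by rewrite cards2 xy.
Qed.

Lemma adjG0 p m (x y : 'I_p) : adj (G0 p m) x y = (x != y) && (x %/ m == y %/ m).
Proof.
rewrite /adj inE; apply/idP/idP.
  case/existsP => a /existsP [b /and3P [ab /eqP abm /eqP E]].
  have xy : x != y.
    have : #|[set x; y]| = 2 by rewrite E cards2 ab.
    by rewrite cards2; case: (x != y).
  have xin : x \in [set a; b] by rewrite -E !inE eqxx.
  have yin : y \in [set a; b] by rewrite -E !inE eqxx orbT.
  have hx : x %/ m = a %/ m by move: xin; rewrite !inE => /orP [/eqP -> | /eqP ->].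
  have hy : y %/ m = a %/ m by move: yin; rewrite !inE => /orP [/eqP -> | /eqP ->].
  by rewrite xy hx hy eqxx.
case/andP => xy xm; apply/existsP; exists x; apply/existsP; exists y.
by rewrite xy xm eqxx.
Qed.

Lemma G0free p n : 10 <= n -> ~~ contains (G0 p (n - 1)) (T3 n).
Proof.
move=> n10; apply/negP => /existsP [f /andP [/injectiveP finj /forall_inP Hf]].
set m := n - 1.
have i0lt : 0 < n by move: n10; clear; lia.
have i1lt : 1 < n by move: n10; clear; lia.
pose i0 := Ordinal i0lt; pose i1 := Ordinal i1lt.
have edge : forall i j : 'I_n, T3edge n i j -> f i %/ m = f j %/ m.
  move=> i j Tij.
  have := Hf [set i; j]; rewrite imsetU1 imset_set1.
  have iT : [set i; j] \in T3 n.
    by rewrite inE; apply/existsP; exists i; apply/existsP; exists j; rewrite eqxx Tij.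
  move=> /(_ iT) h; have h2 : adj (G0 p m) (f i) (f j) := h.
  by move: h2; rewrite adjG0 => /andP [_ /eqP].
have blk : forall j : 'I_n, f j %/ m = f i0 %/ m.
  move=> j; case: (posnP j) => [j0 | jpos].
    by congr (f _ %/ m); apply: val_inj.
  case: (leqP j (n - 4)) => jle.
    by rewrite (edge i0 j) // /T3edge /= jpos jle.
  have e1 : f i1 %/ m = f i0 %/ m.
    by rewrite (edge i0 i1) // /T3edge /=; move: n10; clear; lia.
  rewrite -e1 (edge i1 j) // /T3edge /=.
  have := ltn_ord j; move: jle n10; clear; lia.
set B := [set y : 'I_p | y %/ m == f i0 %/ m].
have sub : f @: [set: 'I_n] \subset B.
  by apply/subsetP => y /imsetP [j _ ->]; rewrite inE blk.
have m0 : 0 < m by rewrite /m; move: n10; clear; lia.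
have cB : #|B| <= m.
  pose g (y : 'I_p) : 'I_m := Ordinal (ltn_pmod y m0).
  rewrite -[X in _ <= X]card_ord -(card_in_imset (f:=g) (D:=B)).
    exact: max_card.
  move=> y1 y2; rewrite !inE => /eqP h1 /eqP h2 /(congr1 val) /= E.
  by apply: val_inj; rewrite /= (divn_eq y1 m) (divn_eq y2 m) h1 h2 E.
have := subset_leq_card sub; rewrite card_imset // cardsT card_ord.
by move: cB; rewrite /m; move: n10; clear => _; lia.
Qed.

Lemma G0count p n k : 10 <= n -> p = k * (n - 1) + (n - 6) ->
  (n - 2) * p - 5 * (n - 6) <= \sum_(x in [set: 'I_p]) deg (G0 p (n - 1)) [set: 'I_p] x.
Proof.
move=> n10 Ep; set m := n - 1.
have m0 : 0 < m by rewrite /m; move: n10; clear; lia.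
pose L (i : nat) := if i < k * m then n - 2 else n - 7.
have hx : forall x : 'I_p, L x <= deg (G0 p m) [set: 'I_p] x.
  move=> x.
  set b := x %/ m.
  set Bx := [set y : 'I_p | y %/ m == b].
  have eN : N (G0 p m) [set: 'I_p] x = Bx :\ x.
    apply/setP => y; rewrite inN in_setT adjG0 !inE /b.
    by rewrite eq_sym [_ == y %/ m]eq_sym.
  rewrite /deg eN.
  have xB : x \in Bx by rewrite inE.
  have cBx := cardsD1 x Bx; rewrite xB /= in cBx.
  pose len := if x < k * m then m else n - 6.
  have hlen : b * m + len <= p /\ len <= m.
    rewrite /len /b; case: (ltnP x (k * m)) => hxk.
      have : x %/ m < k by rewrite ltn_divLR.
      move: Ep n10; rewrite /m; move: (x %/ m) => c; clear; nia.
    have hxp : x < p := ltn_ord x.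
    have -> : x %/ m = k.
      rewrite -(subnKC hxk) divnMDl // divn_small ?addn0 //.
      by move: hxp Ep n10; rewrite /m; clear; lia.
    by move: Ep n10; rewrite /m; clear; lia.
  have : len <= #|Bx|.
    case: hlen => hl1 hl2.
    pose g (j : 'I_len) : 'I_p := insubd x (b * m + j).
    have gv : forall j : 'I_len, val (g j) = b * m + j.
      move=> j; rewrite /g val_insubd ifT //.
      by have := ltn_ord j; move: hl1; clear; lia.
    have ginj : injective g.
      move=> j1 j2 E; apply: val_inj; have := congr1 val E; rewrite !gv.
      by move/eqP; rewrite eqn_add2l => /eqP.
    have : g @: [set: 'I_len] \subset Bx.
      apply/subsetP => y /imsetP [j _ ->]; rewrite inE gv divnMDl // divn_small ?addn0 //.
      by have := ltn_ord j; move: hl2; clear; lia.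
    by move=> /subset_leq_card; rewrite card_imset // cardsT card_ord.
  rewrite /L /len; case: (x < k * m); rewrite cBx /m; move: (#|Bx :\ x|) n10; clear; lia.
apply: (@leq_trans (\sum_(x in [set: 'I_p]) L x)); last by apply: leq_sum => x _; exact: hx.
rewrite (eq_bigl (fun x : 'I_p => true)); last by move=> x; rewrite in_setT.
rewrite -(big_mkord xpredT L) (@big_cat_nat _ _ _ (k * m)) //; last first.
  by rewrite Ep leq_addr.
rewrite /= (eq_big_nat _ _ (F2 := fun _ => n - 2)); last first.
  by move=> i /andP [_ hi]; rewrite /L hi.
rewrite (eq_big_nat _ _ (F1 := L) (F2 := fun _ => n - 7)); last first.
  by move=> i /andP [hi _]; rewrite /L ltnNge hi.
rewrite !sum_nat_const_nat Ep /m.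
move: n10; clear; nia.
Qed.

Theorem theorem4p3 (p n k : nat) :
  1 <= k -> 10 <= n -> n <= p -> p = k * (n - 1) + n - 6 ->
  2 * ex p (T3 n) = (n - 2) * p - 5 * (n - 6).
Proof.
move=> k1 n10 np Ep.
have Ep' : p = k * (n - 1) + (n - 6).
  by rewrite Ep addnBA //; move: n10; clear; lia.
set P := fun G : {set {set 'I_p}} => is_graph G && ~~ contains G (T3 n).
have up : forall G, P G -> 2 * #|G| <= (n - 2) * p - 5 * (n - 6).
  move=> G /andP [HG TG]; rewrite -(handshake HG).
  have := key HG n10 TG (k := k) (V := [set: 'I_p]); rewrite cardsT card_ord => /(_ Ep').
  move=> h; rewrite leq_subRL; first by rewrite addnC.
  by apply: leq_trans h; apply: leq_addl.
have G0P : P (G0 p (n - 1)) by rewrite /P G0graph G0free.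
have lo : (n - 2) * p - 5 * (n - 6) <= 2 * #|G0 p (n - 1)|.
  by rewrite -(handshake (G0graph _ _)); exact: G0count Ep'.
have eex : ex p (T3 n) = \max_(G in [pred G | P G]) #|G|.
  by rewrite /ex; apply: eq_bigl => G; rewrite inE.
apply/eqP; rewrite eqn_leq; apply/andP; split.
  have c0 : 0 < #|[pred G | P G]| by apply/card_gt0P; exists (G0 p (n - 1)); rewrite inE.
  have [G GP E] := eq_bigmax_cond (fun G : {set {set 'I_p}} => #|G|) c0.
  by rewrite eex E; apply: up; move: GP; rewrite inE.
apply: leq_trans lo _; rewrite leq_mul2l; apply/orP; right.
rewrite eex; have G0P2 : G0 p (n - 1) \in [pred G | P G] by rewrite inE.
pose Q := [pred G | P G]. change (#|G0 p (n - 1)| <= \max_(G | Q G) #|G|). apply: (@leq_bigmax_cond _ Q (fun G => #|G|) (G0 p (n - 1))). by rewrite /Q inE.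
Qed.
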